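(* Let $n\ge1$ and let $\mathcal{I}$ be an interval hypergraph on $[n]$ containing all singletons. The map $\pi\mapsto \mathrm{Or}_\pi$ from the weak order on permutations of $[n]$ to $P_{\mathcal{I}}$ is a meet (resp. join) semilattice morphism if and only if $\mathcal{I}$ is closed under initial (resp. final) subintervals, i.e. $[i,k]\in\mathcal{I}$ implies $[i,j]\in\mathcal{I}$ (resp. $[j,k]\in\mathcal{I}$) for all $1\le i<j<k\le n$.
   Context: An interval hypergraph $\mathcal{I}$ on $[n]$ is a collection of intervals $[i,j]=\{i,\dots,j\}$ of $[n]$, by convention containing all singletons. An orientation is a map $O:\mathcal{I}\to[n]$ with $O(I)\in I$; it is acyclic if there are no $H_1,\dots,H_k\in\mathcal{I}$, $k\ge2$, with $O(H_{i+1})\in H_i\setminus\{O(H_i)\}$ for $i\in[k-1]$ and $O(H_1)\in H_k\setminus\{O(H_k)\}$. Orientations $O\ne O'$ are related by an increasing flip (from $O$ to $O'$) if there exist $1\le i<j\le n$ such that for all $H$: if $O(H)\ne O'(H)$ then $O(H)=i$, $O'(H)=j$; and if $\{i,j\}\subseteq H$ then $O(H)=i\iff O'(H)=j$. $P_{\mathcal{I}}$ is the transitive closure of the increasing flip relation on acyclic orientations. For a permutation $\pi$ of $[n]$ (in one-line notation), $\mathrm{Or}_\pi$ is the acyclic orientation with $\mathrm{Or}_\pi(I)=\pi(\min\{j:\pi(j)\in I\})$; this map is a surjective poset morphism from the weak order to $P_{\mathcal{I}}$. A map $\phi$ between meet semilattices is a meet semilattice morphism if $\phi(a\wedge b)=\phi(a)\wedge\phi(b)$;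 equivalently, each fiber of $\phi$ is order convex and has a unique minimal element, and the map sending $a$ to the minimal element of its fiber is order preserving. Join semilattice morphisms are defined dually. *)

(* Defs.v *)
From Stdlib Require Import Relations.
From mathcomp Require Import all_boot all_fingroup.
Set Implicit Arguments. Unset Strict Implicit. Unset Printing Implicit Defensive.

(* [n] is modelled by 'I_n = {0,..,n-1}.  An interval [i,j] is the pair (i,j)
   with i <= j; the hypergraph is a set of such pairs. *)
Definition interval_t (n : nat) := ('I_n * 'I_n)%type.

Definition inH n (H : interval_t n) (x : 'I_n) : bool := (H.1 <= x <= H.2)%N.

Definition interval_hypergraph n (I : {set interval_t n}) : Prop :=
  (forall H, H \in I -> (H.1 <= H.2)%N) /\ (forall i : 'I_n, (i, i) \in I).

(* orientations: values outside I are normalised to H.1 so that an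
   orientation is determined by its values on I *)
Definition orientation_t n := {ffun interval_t n -> 'I_n}.

Definition is_orientation n (I : {set interval_t n}) (O : orientation_t n) : Prop :=
  forall H, if H \in I then inH H (O H) else O H == H.1.

Definition orel n (O : orientation_t n) : rel (interval_t n) :=
  fun H H' => inH H (O H') && (O H' != O H).

Definition acyclic_or n (I : {set interval_t n}) (O : orientation_t n) : Prop :=
  is_orientation I O /\
  ~ (exists s : seq (interval_t n),
        (2 <= size s)%N /\ all (fun H => H \in I) s /\ path.cycle (orel O) s).

Definition incr_flip n (I : {set interval_t n}) (O O' : orientation_t n) : Prop :=
  O <> O' /\
  exists i j : 'I_n, (i < j)%N /\
    forall H, H \in I ->
      (O H <> O' H -> O H = i /\ O' H = j) /\
      (inH H i && inH H j -> (O H = i <-> O' H = j)).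

Definition flipA n (I : {set interval_t n}) (O O' : orientation_t n) : Prop :=
  acyclic_or I O /\ acyclic_or I O' /\ incr_flip I O O'.

Definition PI_le n (I : {set interval_t n}) : relation (orientation_t n) :=
  clos_refl_trans (orientation_t n) (@flipA n I).

Definition PI_glb n (I : {set interval_t n}) (x a b : orientation_t n) : Prop :=
  acyclic_or I x /\ PI_le I x a /\ PI_le I x b /\
  forall y, acyclic_or I y -> PI_le I y a -> PI_le I y b -> PI_le I y x.

Definition PI_lub n (I : {set interval_t n}) (x a b : orientation_t n) : Prop :=
  acyclic_or I x /\ PI_le I a x /\ PI_le I b x /\
  forall y, acyclic_or I y -> PI_le I a y -> PI_le I b y -> PI_le I x y.

(* weak order on permutations (one-line notation pi(0) ... pi(n-1)):
   inversion set = pairs of values (a,b), a<b, with b before a *)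
Definition inv_set n (p : {perm 'I_n}) : {set 'I_n * 'I_n} :=
  [set ab : 'I_n * 'I_n | (ab.1 < ab.2)%N && ((p^-1)%g ab.2 < (p^-1)%g ab.1)%N].

Definition weak_le n (p q : {perm 'I_n}) : bool := inv_set p \subset inv_set q.

Definition weak_glb n (c a b : {perm 'I_n}) : Prop :=
  weak_le c a /\ weak_le c b /\
  forall d, weak_le d a -> weak_le d b -> weak_le d c.

Definition weak_lub n (c a b : {perm 'I_n}) : Prop :=
  weak_le a c /\ weak_le b c /\
  forall d, weak_le a d -> weak_le b d -> weak_le c d.

Definition Or n (I : {set interval_t n}) (p : {perm 'I_n}) : orientation_t n :=
  [ffun H : interval_t n =>
     if H \in I then p [arg min_(j < (p^-1)%g H.1 | inH H (p j)) (j : nat)]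
     else H.1].

Definition Or_meet_morphism n (I : {set interval_t n}) : Prop :=
  forall a b c : {perm 'I_n}, weak_glb c a b -> PI_glb I (Or I c) (Or I a) (Or I b).

Definition Or_join_morphism n (I : {set interval_t n}) : Prop :=
  forall a b c : {perm 'I_n}, weak_lub c a b -> PI_lub I (Or I c) (Or I a) (Or I b).

Definition closed_initial n (I : {set interval_t n}) : Prop :=
  forall i j k : 'I_n, (i < j < k)%N -> (i, k) \in I -> (i, j) \in I.

Definition closed_final n (I : {set interval_t n}) : Prop :=
  forall i j k : 'I_n, (i < j < k)%N -> (i, k) \in I -> (j, k) \in I.

(* Main.v *)
Require Import Defs.
From mathcomp Require Import all_boot all_fingroup zify.
From Stdlib Require Import Relations.
Set Implicit Arguments. Unset Strict Implicit. Unset Printing Implicit Defensive.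

Definition pos n (p : {perm 'I_n}) (v : 'I_n) : nat := (p^-1)%g v.

Lemma pos_inj n (p : {perm 'I_n}) : injective (pos p).
Proof. by move=> u v /val_inj /perm_inj. Qed.

Lemma pos_perm n (p : {perm 'I_n}) j : pos p (p j) = j.
Proof. by rewrite /pos permK. Qed.

Definition wfI n (I : {set interval_t n}) := forall H, H \in I -> (H.1 <= H.2)%N.

Lemma Or_in n (I : {set interval_t n}) p H : wfI I -> H \in I ->
  inH H (Or I p H) /\ forall v, inH H v -> (pos p (Or I p H) <= pos p v)%N.
Proof.
move=> wf HI; rewrite /Or ffunE HI.
case: arg_minnP.
- by rewrite permKV /inH leqnn wf.
move=> j Pj min; split => // v Hv.
rewrite pos_perm; apply: min; by rewrite /pos permKV.
Qed.

Lemma Or_out n (I : {set interval_t n}) p H : H \notin I -> Or I p H = H.1.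
Proof. by move=> /negbTE HI; rewrite /Or ffunE HI. Qed.

Lemma Or_eq n (I : {set interval_t n}) p H o : wfI I -> H \in I -> inH H o ->
  (forall v, inH H v -> (pos p o <= pos p v)%N) -> Or I p H = o.
Proof.
move=> wf HI Ho min; have [H1 H2] := Or_in p wf HI.
apply: (@pos_inj _ p); apply/eqP; rewrite eqn_leq (H2 _ Ho) /=.
exact: min.
Qed.

Lemma Or_orient n (I : {set interval_t n}) p : wfI I -> is_orientation I (Or I p).
Proof.
move=> wf H; case: ifP => HI; first by case: (Or_in p wf HI).
by rewrite Or_out ?HI.
Qed.

Lemma orel_Or n (I : {set interval_t n}) p A B : wfI I -> A \in I ->
  orel (Or I p) A B -> (pos p (Or I p A) < pos p (Or I p B))%N.
Proof.
move=> wf AI /andP[inB ne]; have [_ m] := Or_in p wf AI.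
rewrite ltn_neqAle m // andbT; apply: contraNneq ne => /pos_inj -> //.
Qed.

Lemma Or_acyclic n (I : {set interval_t n}) p : wfI I -> acyclic_or I (Or I p).
Proof.
move=> wf; split; first exact: Or_orient.
case=> [[|x s] [_ [allI cyc]]] //.
have allI' : all (fun H => H \in I) (x :: rcons s x).
  by rewrite /= all_rcons; move: allI => /= /andP[-> ->].
have sub : {in (fun H => H \in I) &, subrel (orel (Or I p))
   (fun A B => (pos p (Or I p A) < pos p (Or I p B))%N)}.
  by move=> A B AI _; apply: orel_Or.
have P := sub_in_path sub allI' cyc.
have tr : ssrbool.transitive (fun A B => (pos p (Or I p A) < pos p (Or I p B))%N).
  by move=> ? ? ?; apply: ltn_trans.
have := order_path_min tr P.
by rewrite all_rcons ltnn.
Qed.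

Lemma PI_le_val n (I : {set interval_t n}) O O' : PI_le I O O' ->
  forall H, H \in I -> (O H <= O' H)%N.
Proof.
elim=> [A B [_ [_ [_ [i [j [ij F]]]]]] H HI| A H HI | A B C _ IH1 _ IH2 H HI].
- case: (F H HI) => F1 _.
  case: (eqVneq (A H) (B H)) => [->//|ne].
  have ne' : A H <> B H by apply/eqP.
  by case: (F1 ne') => -> ->; apply: ltnW.
- by [].
- exact: leq_trans (IH1 _ HI) (IH2 _ HI).
Qed.

Definition cover_hyp n (p p' : {perm 'I_n}) (x y : 'I_n) :=
  [/\ (pos p x < pos p y)%N,
      (forall v, (pos p x < pos p v)%N -> (pos p v < pos p y)%N -> False),
      (pos p' y < pos p' x)%N &
      (forall u v, ~~ ((u == x) && (v == y) || (u == y) && (v == x)) ->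
          (pos p' u < pos p' v)%N = (pos p u < pos p v)%N)].

Lemma cover_core n (I : {set interval_t n}) p p' x y H : wfI I ->
  cover_hyp p p' x y -> H \in I ->
  (Or I p H = x /\ inH H y /\ Or I p' H = y) \/
  (Or I p' H = Or I p H /\ ~ (Or I p H = x /\ inH H y)).
Proof.
move=> wf [xy nb yx pres] HI.
have xney : x != y by apply: contraTneq xy => ->; rewrite ltnn.
have [ho mino] := Or_in p wf HI.
case: (boolP ((Or I p H == x) && inH H y)) => [/andP[/eqP ox hy]|nc].
  left; split => //; split => //.
  apply: Or_eq => // v hv.
  case: (eqVneq v y) => [->//|vy].
  case: (eqVneq v x) => [->|vx]; first exact: ltnW.
  apply: ltnW; rewrite pres; last by rewrite (negbTE vy) (negbTE vx) !andbF.
  have := mino v hv; rewrite ox leq_eqVlt => /orP[/eqP/pos_inj e|xv].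
    by rewrite e eqxx in vx.
  rewrite ltn_neqAle; apply/andP; split.
    by apply: contra vy => /eqP/pos_inj ->.
  by rewrite leqNgt; apply/negP => /(nb _ xv).
right; split; last by move=> [ox hy]; move: nc; rewrite ox hy eqxx.
apply: Or_eq => // v hv.
case: (eqVneq v (Or I p H)) => [->//|vo].
have lt : (pos p (Or I p H) < pos p v)%N.
  by rewrite ltn_neqAle mino // andbT; apply: contra vo => /eqP/pos_inj ->.
apply: ltnW; rewrite pres //.
apply/negP => /orP[/andP[/eqP ox /eqP vy]|/andP[/eqP oy /eqP vx]].
  by move: nc; rewrite ox -vy hv eqxx.
by move: lt; rewrite oy vx ltnNge ltnW.
Qed.

Lemma cover_PI n (I : {set interval_t n}) p p' x y : wfI I ->
  cover_hyp p p' x y -> (x < y)%N -> PI_le I (Or I p) (Or I p').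
Proof.
move=> wf ch xy.
case: (eqVneq (Or I p) (Or I p')) => [->|ne]; first exact: rt_refl.
apply: rt_step; split; first exact: Or_acyclic.
split; first exact: Or_acyclic.
split; first by apply/eqP.
exists x, y; split => // H HI.
case: (cover_core wf ch HI) => [[ox [hy oy]]|[oe nc]].
  by split => // _; split.
split; first by rewrite oe.
move=> /andP[hx hy]; split => [ox|]; first by case: nc.
rewrite oe => oy; exfalso.
case: ch => xy' _ _ _.
have [_ mino] := Or_in p wf HI.
by move: (mino x hx); rewrite oy leqNgt xy'.
Qed.

Lemma Or_same n (I : {set interval_t n}) p q : wfI I ->
  (forall u v, (pos p u < pos p v)%N -> (pos q u < pos q v)%N) -> Or I p = Or I q.
Proof.
move=> wf hpq; apply/ffunP => H.
case: (boolP (H \in I)) => HI; last by rewrite !Or_out.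
symmetry; have [ho mino] := Or_in p wf HI.
apply: Or_eq => // v hv.
case: (eqVneq v (Or I p H)) => [->//|vo].
apply: ltnW; apply: hpq.
by rewrite ltn_neqAle mino // andbT; apply: contra vo => /eqP/pos_inj ->.
Qed.

Lemma inv_setE n (p : {perm 'I_n}) ab :
  (ab \in inv_set p) = (ab.1 < ab.2)%N && (pos p ab.2 < pos p ab.1)%N.
Proof. by rewrite inE. Qed.

Lemma pos_lt_neq n (p : {perm 'I_n}) u v : u != v ->
  (pos p u < pos p v)%N = ~~ (pos p v < pos p u)%N.
Proof.
move=> uv; rewrite -leqNgt ltn_neqAle; case: eqP => //= /pos_inj e.
by rewrite e eqxx in uv.
Qed.

Lemma cover_inv n (p p' : {perm 'I_n}) x y : cover_hyp p p' x y -> (x < y)%N ->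
  inv_set p' = (x, y) |: inv_set p.
Proof.
move=> [xy nb yx pres] lxy; apply/setP => [[a b]].
rewrite in_setU1 !inv_setE /=.
case: (eqVneq (a, b) (x, y)) => [[-> ->]|ne] /=; first by rewrite lxy yx.
case: (boolP ((a == y) && (b == x))) => [/andP[/eqP -> /eqP ->]|nyx].
  by move: (ltnW lxy); rewrite leqNgt => /negbTE ->.
rewrite pres //; apply/negP => /orP[/andP[/eqP bx /eqP ay]|/andP[/eqP by' /eqP ax]].
  by move: nyx; rewrite bx ay !eqxx.
by move: ne; rewrite ax by' eqxx.
Qed.

Lemma adjacent n (p q : {perm 'I_n}) ab :
  inv_set p \subset inv_set q -> ab \in inv_set q :\: inv_set p ->
  exists x y : 'I_n, [/\ (x < y)%N, pos p y = (pos p x).+1 & (x, y) \in inv_set q].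
Proof.
move=> /subsetP sub; rewrite inE => /andP[nab abq].
pose P d := [exists x : 'I_n, exists y : 'I_n,
  [&& (x < y)%N, (pos q y < pos q x)%N & pos p y == pos p x + d]].
have exP : exists d, P d.
  move: nab abq; case: ab => a b; rewrite !inv_setE /= => nab /andP[ab qab].
  have ab' : a != b by apply: contraTneq ab => ->; rewrite ltnn.
  rewrite ab /= -pos_lt_neq // in nab.
  exists (pos p b - pos p a); apply/existsP; exists a; apply/existsP; exists b.
  by rewrite ab qab /=; apply/eqP; lia.
case: (ex_minnP exP) => d /existsP[x /existsP[y /and3P[xy qyx /eqP pd]]] mind.
exists x, y.
have d0 : d != 0 by apply: contraTneq xy => d0; move: pd; rewrite d0 addn0 => /pos_inj ->; rewrite ltnn.
case: (eqVneq d 1) => [d1|d1].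
  split => //; first by rewrite pd d1 addn1.
  by rewrite inv_setE; apply/andP.
exfalso.
have kn : (pos p x).+1 < n.
  by have := ltn_ord ((p^-1)%g y); rewrite -/(pos p y) pd; lia.
pose z := p (Ordinal kn).
have pz : pos p z = (pos p x).+1 by rewrite /z pos_perm.
have zx : z != x by apply/negP => /eqP e; move: pz; rewrite e; lia.
have zy : z != y by apply/negP => /eqP e; move: pz; rewrite e pd; lia.
have [qzx|qxz] : (pos q x < pos q z)%N \/ (pos q z < pos q x)%N.
  case: (ltnP (pos q x) (pos q z)) => h; [by left|right].
  by rewrite ltn_neqAle h andbT; apply: contra zx => /eqP/pos_inj ->.
- case: (ltngtP z y) => [zly|ylz|/val_inj e]; last by rewrite e eqxx in zy.
  + have : P (d.-1).
      apply/existsP; exists z; apply/existsP; exists y.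
      by rewrite zly /=; apply/andP; split; [lia|apply/eqP; rewrite pd pz; lia].
    by move/mind; lia.
  + have : (y, z) \in inv_set q by apply: sub; rewrite inv_setE /= ylz pd pz; lia.
    by rewrite inv_setE /=; lia.
- case: (ltngtP x z) => [xlz|zlx|/val_inj e]; last by rewrite e eqxx in zx.
  + have : P 1.
      apply/existsP; exists x; apply/existsP; exists z.
      by rewrite xlz qxz pz addn1 /=.
    by move/mind; lia.
  + have : (z, x) \in inv_set q by apply: sub; rewrite inv_setE /= zlx pz; lia.
    by rewrite inv_setE /=; lia.
Qed.

Lemma tperm_pres n (k k1 a b : 'I_n) : val k1 = (val k).+1 ->
  ~~ ((a == k) && (b == k1) || (a == k1) && (b == k)) ->
  (tperm k k1 a < tperm k k1 b)%N = (a < b)%N.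
Proof.
move=> kk nab.
have tv : forall c, val (tperm k k1 c) =
   if val c == val k then val k1 else if val c == val k1 then val k else val c.
  move=> c; case: tpermP => [->|->|ck ck1]; rewrite ?eqxx //.
    by rewrite kk; case: eqP => //; lia.
  by rewrite !val_eqE; do 2 case: eqP => //.

rewrite !tv; move: nab; rewrite -!val_eqE.
case: (val a =P val k) => ak; case: (val a =P val k1) => ak1;
  case: (val b =P val k) => bk; case: (val b =P val k1) => bk1 /= nab; try done; simpl in *; lia.
Qed.

Lemma pos_tperm n (p : {perm 'I_n}) k k1 v :
  pos (tperm k k1 * p)%g v = tperm k k1 ((p^-1)%g v).
Proof. by rewrite /pos invMg tpermV permM. Qed.

Lemma Or_mono_aux n (I : {set interval_t n}) (q : {perm 'I_n}) : wfI I ->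
  forall N p, (#|inv_set q :\: inv_set p| <= N)%N -> inv_set p \subset inv_set q ->
  PI_le I (Or I p) (Or I q).
Proof.
move=> wf; elim=> [|N IH] p hN sub;
  case: (set_0Vmem (inv_set q :\: inv_set p)) => [E|[ab hab]].
- have {}E : inv_set q \subset inv_set p by rewrite -setD_eq0 E.
  have sameq : inv_set p = inv_set q by apply/eqP; rewrite eqEsubset sub E.
  rewrite (@Or_same _ _ p q) //; first exact: rt_refl.
  move=> u v uv.
  have unv : u != v by apply: contraTneq uv => ->; rewrite ltnn.
  case: (ltngtP u v) => [ulv|vlu|/val_inj e]; last by rewrite e eqxx in unv.
  + have : (u, v) \notin inv_set p by rewrite inv_setE /= negb_and ulv /= -leqNgt ltnW.
    rewrite sameq inv_setE /= ulv /= -leqNgt leq_eqVlt => /orP[/eqP/pos_inj e|//].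
    by rewrite e eqxx in unv.
  + have : (v, u) \in inv_set p by rewrite inv_setE /= vlu.
    by rewrite sameq inv_setE /= => /andP[].
- by move: hN; rewrite leqn0 cards_eq0 => /eqP E'; rewrite E' inE in hab.
- have {}E : inv_set q \subset inv_set p by rewrite -setD_eq0 E.
  have sameq : inv_set p = inv_set q by apply/eqP; rewrite eqEsubset sub E.
  rewrite (@Or_same _ _ p q) //; first exact: rt_refl.
  move=> u v uv.
  have unv : u != v by apply: contraTneq uv => ->; rewrite ltnn.
  case: (ltngtP u v) => [ulv|vlu|/val_inj e]; last by rewrite e eqxx in unv.
  + have : (u, v) \notin inv_set p by rewrite inv_setE /= negb_and ulv /= -leqNgt ltnW.
    rewrite sameq inv_setE /= ulv /= -leqNgt leq_eqVlt => /orP[/eqP/pos_inj e|//].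
    by rewrite e eqxx in unv.
  + have : (v, u) \in inv_set p by rewrite inv_setE /= vlu.
    by rewrite sameq inv_setE /= => /andP[].
have [x [y [xy pxy xyq]]] := adjacent sub hab.
pose k := (p^-1)%g x; pose k1 := (p^-1)%g y.
pose p' := (tperm k k1 * p)%g.
have kk : val k1 = (val k).+1 by exact: pxy.
have ch : cover_hyp p p' x y.
  split.
  - by rewrite pxy.
  - by move=> v; rewrite pxy; lia.
  - rewrite !pos_tperm -/k -/k1 tpermL tpermR /=; simpl in *; lia.
  - move=> u v nuv; rewrite !pos_tperm tperm_pres //.
    by rewrite /k /k1 !(inj_eq (@perm_inj _ (p^-1)%g)).
have ip := cover_inv ch xy.
have xyp : (x, y) \notin inv_set p.
  by rewrite inv_setE /= pxy; lia.
apply: rt_trans (cover_PI wf ch xy) _.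
apply: IH.
  have : (inv_set q :\: inv_set p') \proper (inv_set q :\: inv_set p).
    apply/properP; split.
      by apply/subsetP => c; rewrite !in_setD ip in_setU1 negb_or => /andP[/andP[_ ->] ->].
    by exists (x, y); rewrite !in_setD ?ip ?setU11 ?xyq ?(negbTE xyp).
  move/proper_card => lt; lia.
by rewrite ip subUset sub sub1set xyq.
Qed.

Lemma Or_mono n (I : {set interval_t n}) p q : wfI I -> weak_le p q ->
  PI_le I (Or I p) (Or I q).
Proof. by move=> wf wl; apply: (Or_mono_aux wf (leqnn _)). Qed.

Definition rk n (R : rel 'I_n) (v : 'I_n) : nat := #|[set u | R u v & u != v]|.

Lemma rk_lt n (R : rel 'I_n) v : (rk R v < n)%N.
Proof.
rewrite /rk; have : [set u | R u v & u != v] \subset [set~ v].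
  by apply/subsetP => u; rewrite !inE => /andP[_].
move/subset_leq_card; rewrite cardsC1 card_ord.
by move=> h; have := ltn_ord v; lia.
Qed.

Definition rko n (R : rel 'I_n) v : 'I_n := Ordinal (rk_lt R v).
Definition rfun n (R : rel 'I_n) (v : 'I_n) := if injectiveb (rko R) then rko R v else v.
Lemma rfun_inj n (R : rel 'I_n) : injective (rfun R).
Proof. by rewrite /rfun; case: injectiveP => [h u v /h|_ u v]. Qed.
Definition rperm n (R : rel 'I_n) : {perm 'I_n} := ((perm (@rfun_inj n R))^-1)%g.

Definition sto n (R : rel 'I_n) :=
  [/\ forall u, R u u = false,
      forall u v w, R u v -> R v w -> R u w &
      forall u v, u != v -> R u v || R v u].

Lemma rk_ltE n (R : rel 'I_n) : sto R -> forall u v, (rk R u < rk R v)%N = R u v.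
Proof.
move=> [irr tr tot].
have H1 : forall u v, R u v -> (rk R u < rk R v)%N.
  move=> u v uv; apply: proper_card; apply/properP; split.
    apply/subsetP => w; rewrite !inE => /andP[wu _]; rewrite (tr _ _ _ wu uv) /=.
    by apply/negP => /eqP e; rewrite e in wu; move: (tr _ _ _ uv wu); rewrite irr.
  exists u; rewrite !inE ?uv ?eqxx ?andbF //=.
  by apply/negP => /eqP e; move: uv; rewrite e irr.
move=> u v; case: (eqVneq u v) => [->|uv]; first by rewrite ltnn irr.
case/orP: (tot _ _ uv) => [h|h]; first by rewrite h H1.
have := H1 _ _ h; case: (boolP (R u v)) => [h'|_]; first by move: (tr _ _ _ h' h); rewrite irr.
by move=> lt; apply/negbTE; rewrite -leqNgt ltnW.
Qed.

Lemma rperm_lt n (R : rel 'I_n) : sto R ->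
  forall u v, (pos (rperm R) u < pos (rperm R) v)%N = R u v.
Proof.
move=> st.
have inj : injective (rko R).
  move=> u v /(congr1 val) /= e; apply/eqP; apply/negP => /negP uv.
  have [irr _ tot] := st; case/orP: (tot _ _ uv) => h; have := rk_ltE st.
    by move=> /(_ u v); rewrite h e ltnn.
  by move=> /(_ v u); rewrite h e ltnn.
have rf : forall v, rfun R v = rko R v.
  by move=> v; rewrite /rfun; case: injectiveP.
move=> u v; rewrite /pos /rperm invgK !permE !rf /=.
exact: rk_ltE.
Qed.

Definition ltb (rv : bool) n (x y : 'I_n) : bool := if rv then (y < x)%N else (x < y)%N.

Lemma ltb_irr rv n (x : 'I_n) : ltb rv x x = false.
Proof. by rewrite /ltb ltnn; case: rv. Qed.

Lemma ltb_trans rv n (x y z : 'I_n) : ltb rv x y -> ltb rv y z -> ltb rv x z.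
Proof. by rewrite /ltb; case: rv; lia. Qed.

Lemma ltb_asym rv n (x y : 'I_n) : ltb rv x y -> ltb rv y x = false.
Proof. by rewrite /ltb; case: rv; lia. Qed.

Lemma ltb_total rv n (x y : 'I_n) : x != y -> ltb rv x y || ltb rv y x.
Proof.
rewrite /ltb -val_eqE; case: rv; simpl; lia.
Qed.

Lemma ltb_inH rv n (H : interval_t n) x y z :
  inH H x -> inH H z -> ltb rv x y -> ltb rv y z -> inH H y.
Proof. by rewrite /inH /ltb; case: rv; lia. Qed.

Definition dn rv n (I : {set interval_t n}) (O : orientation_t n) : rel 'I_n :=
  fun y x => ltb rv x y && [exists H, [&& H \in I, O H == y, inH H x & inH H y]].

Definition Dst rv n (I : {set interval_t n}) O (y x : 'I_n) :=
  ltb rv x y && connect (dn rv I O) y x.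

Definition bef rv n (I : {set interval_t n}) O : rel 'I_n :=
  fun u v => if ltb rv u v then ~~ Dst rv I O v u else Dst rv I O u v.

Section D.
Local Notation "x <: y" := (ltb _ x y) (at level 70).
End D.

Lemma path_dec rv n (I : {set interval_t n}) O z s :
  path (dn rv I O) z s -> last z s = z \/ ltb rv (last z s) z.
Proof.
elim: s z => [|w s IH] z /=; first by left.
move=> /andP[/andP[wz _] p]; right; case: (IH w p) => [->//|h].
exact: ltb_trans h wz.
Qed.

Lemma Dst_trans rv n (I : {set interval_t n}) O x y z :
  Dst rv I O z y -> Dst rv I O y x -> Dst rv I O z x.
Proof.
move=> /andP[yz c1] /andP[xy c2]; by rewrite /Dst (ltb_trans xy yz) (connect_trans c1 c2).
Qed.

Lemma Dst_interval rv n (I : {set interval_t n}) O x y z :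
  Dst rv I O z x -> ltb rv x y -> ltb rv y z -> Dst rv I O z y.
Proof.
move=> /andP[_ /connectP[s ps ->]].
elim: s z ps => [|w s IH] z /= ps xy yz.
  by move: (ltb_asym xy); rewrite yz.
move: ps => /andP[dzw ps].
rewrite /Dst yz /=.
case: (eqVneq y w) => [->|yw]; first by apply: connect1.
case/orP: (ltb_total rv yw) => [ylw|wly].
  have /andP[_ c] := IH w ps xy ylw.
  exact: connect_trans (connect1 dzw) c.
apply: connect1; rewrite /dn yz /=.
move: dzw => /andP[_ /existsP[H /and4P[HI OH iw iz]]].
apply/existsP; exists H; rewrite HI OH iz /= andbT.
exact: ltb_inH iw iz wly yz.
Qed.

Lemma last_edge rv n (I : {set interval_t n}) O v o :
  connect (dn rv I O) v o -> ltb rv o v -> exists w, dn rv I O w o /\ ~~ ltb rv v w.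
Proof.
move=> /connectP[s ps ->].
elim: s v ps => [|w s IH] v /= ps; first by rewrite ltb_irr.
move: ps => /andP[dvw ps] _.
case: (path_dec ps) => [->|h].
  by exists v; rewrite ltb_irr.
have [w' [d nl]] := IH w ps h.
exists w'; split => //; apply/negP => vw'.
move: dvw => /andP[wv _].
by move: nl; rewrite (ltb_trans wv vw').
Qed.

Lemma bef_sto rv n (I : {set interval_t n}) O : sto (bef rv I O).
Proof.
have Dirr : forall u, Dst rv I O u u = false by move=> u; rewrite /Dst ltb_irr.
have asym : forall u v, bef rv I O u v -> bef rv I O v u -> False.
  move=> u v; rewrite /bef; case: (boolP (ltb rv u v)) => h.
    by rewrite (ltb_asym h) => nd d; rewrite d in nd.
  case: (boolP (ltb rv v u)) => h2.
    by move=> d nd; rewrite d in nd.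
  by move=> /andP[h3 _]; rewrite h3 in h2.
split.
- by move=> u; rewrite /bef ltb_irr Dirr.
- move=> u v w.
  case: (eqVneq u v) => [->|uv]; first by rewrite /bef ltb_irr Dirr.
  case: (eqVneq v w) => [->|vw]; first by rewrite /bef ltb_irr Dirr.
  case: (eqVneq u w) => [->|uw]; first by move=> h1 h2; case: (asym _ _ h1 h2).
  rewrite /bef.
  case/orP: (ltb_total rv uv) => huv; case/orP: (ltb_total rv vw) => hvw;
    case/orP: (ltb_total rv uw) => huw;
    rewrite ?huv ?hvw ?huw ?(ltb_asym huv) ?(ltb_asym hvw) ?(ltb_asym huw).
  + move=> nvu nwv; apply/negP => dwu; case/negP: nwv.
    exact: Dst_interval dwu huv hvw.
  + by move: (ltb_trans (ltb_trans huv hvw) huw); rewrite ltb_irr.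
  + move=> nvu dvw; apply/negP => dwu; case/negP: nvu.
    exact: Dst_trans dvw dwu.
  + move=> nvu dvw; case/negP: nvu.
    exact: Dst_interval dvw huw huv.
  + move=> duv nwv; apply/negP => dwu; case/negP: nwv.
    exact: Dst_trans dwu duv.
  + move=> duv nwv.
    exact: Dst_interval duv hvw huw.
  + by move: (ltb_trans (ltb_trans huw hvw) huv); rewrite ltb_irr.
  + move=> duv dvw; exact: Dst_trans duv dvw.
- move=> u v uv; rewrite /bef.
  case/orP: (ltb_total rv uv) => h; rewrite h (ltb_asym h).
    by case: (Dst rv I O v u).
  by case: (Dst rv I O u v).
Qed.

Definition mperm rv n (I : {set interval_t n}) O := rperm (bef rv I O).

Lemma pos_m rv n (I : {set interval_t n}) O u v :
  (pos (mperm rv I O) u < pos (mperm rv I O) v)%N = bef rv I O u v.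
Proof. exact: (rperm_lt (bef_sto rv I O)). Qed.

Lemma two_cycle n (I : {set interval_t n}) O H H' : acyclic_or I O ->
  H \in I -> H' \in I -> inH H (O H') -> O H' != O H -> inH H' (O H) -> False.
Proof.
move=> [_ cyc] HI H'I a b c; apply: cyc; exists [:: H; H']; split => //.
split; first by rewrite /= HI H'I.
by rewrite /= /orel a b c eq_sym b.
Qed.

Lemma Or_m rv n (I : {set interval_t n}) O : wfI I -> acyclic_or I O ->
  Or I (mperm rv I O) = O.
Proof.
move=> wf acO; have [ori _] := acO.
apply/ffunP => H; case: (boolP (H \in I)) => HI; last first.
  by rewrite Or_out //; have := ori H; rewrite (negbTE HI) => /eqP.
have hO : inH H (O H) by have := ori H; rewrite HI.
apply: Or_eq => // v hv.
case: (eqVneq v (O H)) => [->//|vo].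
apply: ltnW; rewrite pos_m /bef.
case: (boolP (ltb rv (O H) v)) => h.
  apply/negP => /andP[_ c].
  have [w [/andP[ow /existsP[H' /and4P[H'I /eqP OH' io iw]]] nvw]] := last_edge c h.
  have wH : inH H w.
    case: (eqVneq w v) => [->//|wv].
    have : ltb rv w v by case/orP: (ltb_total rv wv) => // h'; rewrite h' in nvw.
    exact: ltb_inH hO hv ow.
  apply: (two_cycle acO HI H'I); rewrite ?OH' //.
  by apply: contraTneq ow => ->; rewrite ltb_irr.
have h' : ltb rv v (O H).
  by case/orP: (ltb_total rv vo) => // h'; rewrite h' in h.
rewrite /Dst h' /=; apply: connect1; rewrite /dn h' /=.
by apply/existsP; exists H; rewrite HI eqxx hv hO.
Qed.

Lemma m_fiber rv n (I : {set interval_t n}) p y x : wfI I ->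
  Dst rv I (Or I p) y x -> (pos p y < pos p x)%N.
Proof.
move=> wf /andP[xy /connectP[s ps ex]].
have : forall z, path (dn rv I (Or I p)) z s -> last z s = z \/ (pos p z < pos p (last z s))%N.
  elim: s {ps ex} => [|w s IH] z /=; first by left.
  move=> /andP[/andP[wz /existsP[H /and4P[HI /eqP OH iw iz]]] ps]; right.
  have lt : (pos p z < pos p w)%N.
    have [_ mino] := Or_in p wf HI.
    rewrite -OH ltn_neqAle mino // andbT; apply/negP => /eqP /pos_inj e.
    by move: wz; rewrite -OH e ltb_irr.
  by case: (IH w ps) => [->//|h]; exact: ltn_trans lt h.
move=> /(_ y ps); rewrite -ex; case=> // e.
by move: xy; rewrite e ltb_irr.
Qed.

Definition closed_lt rv n (I : {set interval_t n}) :=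
  forall H, H \in I -> forall i, inH H i ->
  exists H0, H0 \in I /\ forall x, inH H0 x = inH H x && ~~ ltb rv i x.

Lemma m_flip rv n (I : {set interval_t n}) A B i j y x : closed_lt rv I ->
  acyclic_or I A -> is_orientation I B ->
  (forall H, H \in I -> A H <> B H -> A H = i /\ B H = j) -> ltb rv i j ->
  Dst rv I A y x -> Dst rv I B y x.
Proof.
move=> cl acA oriB ch ij /andP[xy c]; rewrite /Dst xy /=.
move: c; apply: connect_sub => z w /andP[wz /existsP[H /and4P[HI /eqP OH iw iz]]].
apply: connect1; rewrite /dn wz /=.
case: (eqVneq (A H) (B H)) => [e|ne].
  by apply/existsP; exists H; rewrite HI -e OH eqxx iw iz.
have [Ai Bj] := ch H HI (elimN eqP ne).
subst z; rewrite Ai in iz wz *.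
have [H0 [H0I memH0]] := cl H HI i iz.
have [oriA _] := acA.
have AH0 : A H0 = i.
  case: (eqVneq (A H0) i) => // ne0; exfalso.
  have inA0 : inH H0 (A H0) by have := oriA H0; rewrite H0I.
  apply: (two_cycle acA HI H0I).
  - by move: inA0; rewrite memH0 => /andP[].
  - by rewrite Ai.
  - by rewrite memH0 Ai iz ltb_irr.
have BH0 : B H0 = i.
  case: (eqVneq (A H0) (B H0)) => [<-//|ne0].
  have [_ Bj0] := ch H0 H0I (elimN eqP ne0).
  have : inH H0 (B H0) by have := oriB H0; rewrite H0I.
  by rewrite memH0 Bj0 ij andbF.
apply/existsP; exists H0; rewrite H0I BH0 eqxx /= !memH0 iw iz ltb_irr /=.
by rewrite (ltb_asym wz).
Qed.

Lemma closed_lt_init n (I : {set interval_t n}) :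
  interval_hypergraph I -> closed_initial I -> closed_lt false I.
Proof.
move=> [wf sing] ci [a b] HI i; rewrite /inH /= => /andP[ai ib].
exists (a, i); split; last by move=> x; rewrite /inH /ltb /=; lia.
case: (ltngtP a i) => [ai'|ia|/val_inj e]; last by rewrite e sing.
  case: (ltngtP i b) => [ib'|bi|/val_inj e]; last by rewrite e.
    by apply: (ci a i b) => //; rewrite ai' ib'.
  by move: ib; rewrite leqNgt bi.
by move: ai; rewrite leqNgt ia.
Qed.

Lemma closed_lt_final n (I : {set interval_t n}) :
  interval_hypergraph I -> closed_final I -> closed_lt true I.
Proof.
move=> [wf sing] cf [a b] HI i; rewrite /inH /= => /andP[ai ib].
exists (i, b); split; last by move=> x; rewrite /inH /ltb /=; lia.
case: (ltngtP i b) => [ib'|bi|/val_inj e]; last by rewrite e sing.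
  case: (ltngtP a i) => [ai'|ia|/val_inj e]; last by rewrite -e.
    by apply: (cf a i b) => //; rewrite ai' ib'.
  by move: ai; rewrite leqNgt ia.
by move: ib; rewrite leqNgt bi.
Qed.

Lemma inv_m_false n (I : {set interval_t n}) O ab :
  (ab \in inv_set (mperm false I O)) = (ab.1 < ab.2)%N && Dst false I O ab.2 ab.1.
Proof.
rewrite inv_setE pos_m /bef; case: (boolP (ab.1 < ab.2)%N) => //= h.
by rewrite ltnNge ltnW.
Qed.

Lemma inv_m_true n (I : {set interval_t n}) O ab :
  (ab \in inv_set (mperm true I O)) = (ab.1 < ab.2)%N && ~~ Dst true I O ab.1 ab.2.
Proof.
rewrite inv_setE pos_m /bef; case: (boolP (ab.1 < ab.2)%N) => //= h.
by rewrite h.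
Qed.

Lemma meet_dir n (I : {set interval_t n}) :
  interval_hypergraph I -> closed_initial I -> Or_meet_morphism I.
Proof.
move=> hI ci a b c [ca [cb glb]].
have wf : wfI I := hI.1.
have cl := closed_lt_init hI ci.
split; first exact: Or_acyclic.
split; first exact: Or_mono.
split; first exact: Or_mono.
move=> y acy ya yb.
have mono : forall O O', PI_le I O O' -> weak_le (mperm false I O) (mperm false I O').
  move=> O O'; elim => [A B [acA [acB [_ [i [j [ij F]]]]]] | A | A B C _ h1 _ h2].
  - apply/subsetP => ab; rewrite !inv_m_false => /andP[-> d] /=.
    apply: (m_flip (i := i) (j := j) cl acA acB.1 _ _ d) => //.
    by move=> H HI; case: (F H HI) => h _.
  - exact: subxx.
  - exact: subset_trans h1 h2.
have fib : forall p, weak_le (mperm false I (Or I p)) p.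
  move=> p; apply/subsetP => ab; rewrite inv_m_false inv_setE => /andP[-> d] /=.
  exact: m_fiber wf d.
rewrite -(Or_m false wf acy); apply: Or_mono wf _.
apply: glb.
  exact: subset_trans (mono _ _ ya) (fib a).
exact: subset_trans (mono _ _ yb) (fib b).
Qed.

Lemma join_dir n (I : {set interval_t n}) :
  interval_hypergraph I -> closed_final I -> Or_join_morphism I.
Proof.
move=> hI cf a b c [ac [bc lub]].
have wf : wfI I := hI.1.
have cl := closed_lt_final hI cf.
split; first exact: Or_acyclic.
split; first exact: Or_mono.
split; first exact: Or_mono.
move=> y acy ay by'.
have mono : forall O O', PI_le I O O' -> weak_le (mperm true I O) (mperm true I O').
  move=> O O'; elim => [A B [acA [acB [_ [i [j [ij F]]]]]] | A | A B C _ h1 _ h2].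
  - apply/subsetP => ab; rewrite !inv_m_true => /andP[-> d] /=.
    apply: contra d => d.
    apply: (m_flip (i := j) (j := i) cl acB acA.1 _ _ d) => //.
    move=> H HI ne; have ne' : A H <> B H by move=> e; apply: ne.
    by case: (F H HI) => /(_ ne') [-> ->].
  - exact: subxx.
  - exact: subset_trans h1 h2.
have fib : forall p, weak_le p (mperm true I (Or I p)).
  move=> p; apply/subsetP => ab; rewrite inv_m_true inv_setE => /andP[-> d] /=.
  apply/negP => /(m_fiber wf); rewrite ltnNge ltnW //.
rewrite -(Or_m true wf acy); apply: Or_mono wf _.
apply: lub.
  exact: subset_trans (fib a) (mono _ _ ay).
exact: subset_trans (fib b) (mono _ _ by').
Qed.

Definition kperm n (k : 'I_n -> nat) := rperm (fun u v => (k u < k v)%N).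

Lemma kperm_lt n (k : 'I_n -> nat) : injective k ->
  forall u v, (pos (kperm k) u < pos (kperm k) v)%N = (k u < k v)%N.
Proof.
move=> inj; apply: rperm_lt; split.
- by move=> u; rewrite ltnn.
- by move=> u v w; apply: ltn_trans.
- move=> u v uv; rewrite -neq_ltn; apply: contra uv => /eqP /inj ->.
  by rewrite eqxx.
Qed.

Lemma key_cover n (k k' : 'I_n -> nat) x y : injective k -> injective k' -> x != y ->
  k y = (k x).+1 -> k' x = k y -> k' y = k x ->
  (forall v, v != x -> v != y -> k' v = k v) ->
  cover_hyp (kperm k) (kperm k') x y.
Proof.
move=> inj inj' xy kxy k'x k'y oth.
have nx : forall v, v != x -> k v != k x by move=> v; apply: contra => /eqP /inj ->.
have ny : forall v, v != y -> k v != k y by move=> v; apply: contra => /eqP /inj ->.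
split; rewrite ?kperm_lt //.
- by rewrite kxy.
- by move=> v; rewrite !kperm_lt // kxy; lia.
- by rewrite k'x k'y kxy.
- move=> u v nuv; rewrite !kperm_lt //.
  case: (eqVneq u x) => [eu|ux]; case: (eqVneq u y) => [eu'|uy];
  case: (eqVneq v x) => [ev|vx]; case: (eqVneq v y) => [ev'|vy];
  rewrite ?eu ?eu' ?ev ?ev' in nuv *; rewrite ?eqxx ?andbT ?orbT //= in nuv;
  rewrite ?k'x ?k'y ?oth //; try (by move: xy; rewrite ?eu ?eu' ?ev ?ev' ?eqxx);
  try (have := nx _ vx; have := ny _ vy);
  try (have := nx _ ux; have := ny _ uy); lia.
Qed.

Definition outs rv n (s e : 'I_n) v := ltb rv v s || ltb rv e v.

Definition okey rv n (s j e : 'I_n) (a b c : nat) (v : 'I_n) : nat :=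
  if v == s then 2 * n + a else if v == j then 2 * n + b else if v == e then 2 * n + c
  else if outs rv s e v then val v else 4 * n + val v.

Lemma okeyP rv n (s j e : 'I_n) a b c v :
  (v = s /\ okey rv s j e a b c v = 2 * n + a) \/
  (v = j /\ okey rv s j e a b c v = 2 * n + b) \/
  (v = e /\ okey rv s j e a b c v = 2 * n + c) \/
  (okey rv s j e a b c v = val v /\ outs rv s e v) \/
  (okey rv s j e a b c v = 4 * n + val v /\ ~~ outs rv s e v).
Proof.
rewrite /okey; case: (eqVneq v s) => [->|vs]; first by left.
case: (eqVneq v j) => [->|vj]; first by right; left.
case: (eqVneq v e) => [->|ve]; first by right; right; left.
by case: (boolP (outs rv s e v)) => h; [do 3 right; left|do 4 right].
Qed.

Lemma okey_inj rv n (s j e : 'I_n) a b c : val s != val j -> val s != val e -> val j != val e ->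
  a != b -> a != c -> b != c -> (a <= 2)%N -> (b <= 2)%N -> (c <= 2)%N ->
  injective (okey rv s j e a b c).
Proof.
move=> sj se je ab ac bc a2 b2 c2 u v.
have := ltn_ord u; have := ltn_ord v; have := ltn_ord s; have := ltn_ord j.
case: (okeyP rv s j e a b c u) => [[-> ->]|[[-> ->]|[[-> ->]|[[-> _]|[-> _]]]]];
case: (okeyP rv s j e a b c v) => [[-> ->]|[[-> ->]|[[-> ->]|[[-> _]|[-> _]]]]] //;
move=> *; apply: val_inj; simpl in *; lia.
Qed.

Lemma Or_kperm_eq n (I : {set interval_t n}) (k : 'I_n -> nat) H o : wfI I -> injective k ->
  H \in I -> inH H o -> (forall v, inH H v -> (k o <= k v)%N) -> Or I (kperm k) H = o.
Proof.
move=> wf inj HI ho min; apply: Or_eq => // v hv.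
case: (eqVneq v o) => [->//|vo]; apply: ltnW; rewrite kperm_lt //.
rewrite ltn_neqAle min // andbT; apply: contra vo => /eqP /inj ->.
by rewrite eqxx.
Qed.

Lemma Or_kperm_min n (I : {set interval_t n}) (k : 'I_n -> nat) H v : wfI I -> injective k ->
  H \in I -> inH H v -> (k (Or I (kperm k) H) <= k v)%N.
Proof.
move=> wf inj HI hv; have [_ min] := Or_in (kperm k) wf HI.
by have := min v hv; rewrite leqNgt kperm_lt // -leqNgt.
Qed.

Lemma invK n (k : 'I_n -> nat) ab : injective k ->
  (ab \in inv_set (kperm k)) = (ab.1 < ab.2)%N && (k ab.2 < k ab.1)%N.
Proof. by move=> inj; rewrite inv_setE kperm_lt. Qed.

Definition noSJ rv n (I : {set interval_t n}) (s j e : 'I_n) :=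
  forall H, H \in I -> inH H s -> inH H j -> ~~ inH H e ->
  exists v, inH H v /\ outs rv s e v.

Lemma okey_s rv n (s j e : 'I_n) a b c : okey rv s j e a b c s = 2 * n + a.
Proof. by rewrite /okey eqxx. Qed.
Lemma okey_j rv n (s j e : 'I_n) a b c : j != s -> okey rv s j e a b c j = 2 * n + b.
Proof. by move=> js; rewrite /okey (negbTE js) eqxx. Qed.
Lemma okey_e rv n (s j e : 'I_n) a b c : e != s -> e != j -> okey rv s j e a b c e = 2 * n + c.
Proof. by move=> es ej; rewrite /okey (negbTE es) (negbTE ej) eqxx. Qed.

Lemma okey_cases rv n (s j e : 'I_n) v :
  v = s \/ v = j \/ v = e \/
  (outs rv s e v /\ forall a b c, okey rv s j e a b c v = val v) \/
  (~~ outs rv s e v /\ forall a b c, okey rv s j e a b c v = 4 * n + val v).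
Proof.
case: (eqVneq v s) => [->|vs]; first by left.
case: (eqVneq v j) => [->|vj]; first by right; left.
case: (eqVneq v e) => [->|ve]; first by right; right; left.
do 3 right; case: (boolP (outs rv s e v)) => h; [left|right]; split => // a b c.
  by rewrite /okey (negbTE vs) (negbTE vj) (negbTE ve) h.
by rewrite /okey (negbTE vs) (negbTE vj) (negbTE ve) (negbTE h).
Qed.

Ltac okc rv s j e u v js es ej :=
  case: (okey_cases rv s j e u) => [->|[->|[->|[[_ Ku]|[_ Ku]]]]];
  case: (okey_cases rv s j e v) => [->|[->|[->|[[_ Kv]|[_ Kv]]]]];
  rewrite ?okey_s ?okey_j ?okey_e //;
  repeat match goal with H : forall a b c : nat, okey _ _ _ _ a b c _ = _ |- _ =>
    rewrite !H; clear H end;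
  simpl in *; lia.

Lemma keys_meet n (s j e u v : 'I_n) : (s < j)%N -> (j < e)%N -> (u < v)%N ->
  let K := okey false s j e in
  [/\ (K 0 1 2 v < K 0 1 2 u -> K 1 0 2 v < K 1 0 2 u)%N,
      (K 0 1 2 v < K 0 1 2 u -> K 1 2 0 v < K 1 2 0 u)%N &
      (K 1 0 2 v < K 1 0 2 u -> K 1 2 0 v < K 1 2 0 u -> K 0 1 2 v < K 0 1 2 u)%N].
Proof.
move=> sj je uv K.
have js : j != s by rewrite -val_eqE /=; lia.
have es : e != s by rewrite -val_eqE /=; lia.
have ej : e != j by rewrite -val_eqE /=; lia.
rewrite /K; split; move: uv (ltn_ord u) (ltn_ord v); okc false s j e u v js es ej.
Qed.

Lemma keys_join n (s j e u v : 'I_n) : (j < s)%N -> (e < j)%N -> (u < v)%N ->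
  let K := okey true s j e in
  [/\ (K 1 0 2 v < K 1 0 2 u -> K 0 1 2 v < K 0 1 2 u)%N,
      (K 1 2 0 v < K 1 2 0 u -> K 0 1 2 v < K 0 1 2 u)%N &
      (K 0 1 2 v < K 0 1 2 u -> (K 1 0 2 v < K 1 0 2 u) || (K 1 2 0 v < K 1 2 0 u))%N].
Proof.
move=> sj je uv K.
have js : j != s by rewrite -val_eqE /=; lia.
have es : e != s by rewrite -val_eqE /=; lia.
have ej : e != j by rewrite -val_eqE /=; lia.
rewrite /K; split; move: uv (ltn_ord u) (ltn_ord v); okc true s j e u v js es ej.
Qed.

Lemma okey_oth rv n (s j e : 'I_n) a b c a' b' c' v : v != s -> v != j -> v != e ->
  okey rv s j e a b c v = okey rv s j e a' b' c' v.
Proof. by move=> vs vj ve; rewrite /okey (negbTE vs) (negbTE vj) (negbTE ve). Qed.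

Lemma outs_s rv n (s j e : 'I_n) : ltb rv s j -> ltb rv j e -> ~~ outs rv s e s.
Proof. by move=> sj je; rewrite /outs ltb_irr (ltb_asym (ltb_trans sj je)). Qed.
Lemma outs_j rv n (s j e : 'I_n) : ltb rv s j -> ltb rv j e -> ~~ outs rv s e j.
Proof. by move=> sj je; rewrite /outs (ltb_asym sj) (ltb_asym je). Qed.
Lemma outs_e rv n (s j e : 'I_n) : ltb rv s j -> ltb rv j e -> ~~ outs rv s e e.
Proof. by move=> sj je; rewrite /outs ltb_irr (ltb_asym (ltb_trans sj je)). Qed.

Lemma outs_key rv n (s j e : 'I_n) a b c v : ltb rv s j -> ltb rv j e ->
  outs rv s e v -> okey rv s j e a b c v = val v.
Proof.
move=> sj je o; case: (okey_cases rv s j e v) => [e'|[e'|[e'|[[_ ->]//|[no _]]]]].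
- by move: o; rewrite e' (negbTE (outs_s sj je)).
- by move: o; rewrite e' (negbTE (outs_j sj je)).
- by move: o; rewrite e' (negbTE (outs_e sj je)).
- by rewrite o in no.
Qed.

Lemma ins_key rv n (s j e : 'I_n) a b c v : ltb rv s j -> ltb rv j e ->
  ~~ outs rv s e v -> (2 * n <= okey rv s j e a b c v)%N.
Proof.
move=> sj je no.
have js : j != s by apply: contraTneq sj => ->; rewrite ltb_irr.
have ej : e != j by apply: contraTneq je => ->; rewrite ltb_irr.
have es : e != s by apply: contraTneq (ltb_trans sj je) => ->; rewrite ltb_irr.
case: (okey_cases rv s j e v) => [->|[->|[->|[[o _]|[_ ->]]]]];
  rewrite ?okey_s ?okey_j ?okey_e //; try lia.
Qed.

Lemma ar1 n (v : nat) k : (v < n)%N -> (2 * n + k <= v)%N -> False.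
Proof. lia. Qed.

Lemma okey_inj2 rv n (s j e : 'I_n) a b c : ltb rv s j -> ltb rv j e ->
  a != b -> a != c -> b != c -> (a <= 2)%N -> (b <= 2)%N -> (c <= 2)%N ->
  injective (okey rv s j e a b c).
Proof.
move=> sj je; apply: okey_inj; rewrite val_eqE.
- by apply: contraTneq sj => ->; rewrite ltb_irr.
- by apply: contraTneq (ltb_trans sj je) => ->; rewrite ltb_irr.
- by apply: contraTneq je => ->; rewrite ltb_irr.
Qed.

Lemma cex rv n (I : {set interval_t n}) (s j e : 'I_n) H0 : wfI I ->
  ltb rv s j -> ltb rv j e -> H0 \in I -> (forall v, inH H0 v = ~~ outs rv s e v) ->
  noSJ rv I s j e ->
  (if rv then Or_join_morphism I else Or_meet_morphism I) -> False.
Proof.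
move=> wf sj je H0I memH0 nosj morph.
have se := ltb_trans sj je.
have js : j != s by apply: contraTneq sj => ->; rewrite ltb_irr.
have ej : e != j by apply: contraTneq je => ->; rewrite ltb_irr.
have es : e != s by apply: contraTneq se => ->; rewrite ltb_irr.
pose K := okey rv s j e.
have i102 : injective (K 1 0 2) by exact: okey_inj2.
have i201 : injective (K 2 0 1) by exact: okey_inj2.
have i210 : injective (K 2 1 0) by exact: okey_inj2.
have i120 : injective (K 1 2 0) by exact: okey_inj2.
have i012 : injective (K 0 1 2) by exact: okey_inj2.
pose pa := kperm (K 1 0 2).
pose pa' := kperm (K 2 0 1).
pose pb' := kperm (K 2 1 0).
pose pb := kperm (K 1 2 0).
pose pc := kperm (K 0 1 2).
have F1 : Or I pa = Or I pa'.
  have ch : cover_hyp pa pa' s e.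
    have se' : s != e by move: es; rewrite eq_sym.
    have k1 : K 1 0 2 e = (K 1 0 2 s).+1 by rewrite /K okey_s okey_e ?addnS.
    have k2 : K 2 0 1 s = K 1 0 2 e by rewrite /K okey_s okey_e.
    have k3 : K 2 0 1 e = K 1 0 2 s by rewrite /K okey_s okey_e.
    apply: (key_cover i102 i201 se' k1 k2 k3).
    move=> v vs ve; case: (eqVneq v j) => [->|vj]; first by rewrite /K !okey_j.
    exact: okey_oth.
  apply/ffunP => H; case: (boolP (H \in I)) => HI; last by rewrite !Or_out.
  case: (cover_core wf ch HI) => [[os [he _]]|[-> _]] //.
  have hs : inH H s by have [+ _] := Or_in pa wf HI; rewrite os.
  have hj : inH H j by apply: (ltb_inH hs he sj je).
  by have := Or_kperm_min wf i102 HI hj; rewrite os /K okey_s okey_j // leq_add2l.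
have F3 : Or I pb' = Or I pb.
  have ch : cover_hyp pb' pb j s.
    have k1 : K 2 1 0 s = (K 2 1 0 j).+1 by rewrite /K okey_s okey_j ?addnS.
    have k2 : K 1 2 0 j = K 2 1 0 s by rewrite /K okey_s okey_j.
    have k3 : K 1 2 0 s = K 2 1 0 j by rewrite /K okey_s okey_j.
    apply: (key_cover i210 i120 js k1 k2 k3).
    move=> v vj vs; case: (eqVneq v e) => [->|ve]; first by rewrite /K !okey_e.
    exact: okey_oth.
  apply/ffunP => H; case: (boolP (H \in I)) => HI; last by rewrite !Or_out.
  case: (cover_core wf ch HI) => [[oj [hs _]]|[-> _]] //.
  have hj : inH H j by have [+ _] := Or_in pb' wf HI; rewrite oj.
  case: (boolP (inH H e)) => he.
    by have := Or_kperm_min wf i210 HI he; rewrite oj /K okey_j // okey_e // leq_add2l.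
  have [v [hv ov]] := nosj H HI hs hj he.
  have := Or_kperm_min wf i210 HI hv; rewrite oj /K okey_j // (outs_key _ _ _ sj je ov).
  by move=> h; exfalso; apply: (ar1 (ltn_ord v) h).
have hjH0 : inH H0 j by rewrite memH0 (outs_j sj je).
have hsH0 : inH H0 s by rewrite memH0 (outs_s sj je).
have F4a : Or I pa H0 = j.
  apply: Or_kperm_eq => // v; rewrite memH0 => no.
  by rewrite /K okey_j // addn0 ins_key.
have F4c : Or I pc H0 = s.
  apply: Or_kperm_eq => // v; rewrite memH0 => no.
  by rewrite /K okey_s // addn0 ins_key.
move: morph sj je se memH0 nosj F1 F3 F4a F4c; rewrite /pa /pa' /pb' /pb /pc /K.
move: i102 i201 i210 i120 i012; rewrite /K.
clear pa pa' pb' pb pc K.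
case: rv => i102 i201 i210 i120 i012 morph sj je se memH0 nosj F1 F3 F4a F4c.
-
  have F2 : PI_le I (Or I (kperm (okey true s j e 2 1 0))) (Or I (kperm (okey true s j e 2 0 1))).
    apply: (cover_PI (x := e) (y := j) wf); last by [].
    have k1 : okey true s j e 2 1 0 j = (okey true s j e 2 1 0 e).+1 by rewrite okey_j ?okey_e ?addnS.
    have k2 : okey true s j e 2 0 1 e = okey true s j e 2 1 0 j by rewrite okey_j ?okey_e.
    have k3 : okey true s j e 2 0 1 j = okey true s j e 2 1 0 e by rewrite okey_j ?okey_e.
    apply: (key_cover i210 i201 ej k1 k2 k3).
    move=> v ve vj; case: (eqVneq v s) => [->|vs]; first by rewrite !okey_s.
    exact: okey_oth.
  have lub : weak_lub (kperm (okey true s j e 0 1 2)) (kperm (okey true s j e 1 0 2))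
      (kperm (okey true s j e 1 2 0)).
    split; [|split].
    - by apply/subsetP => -[u v]; rewrite !invK // => /andP[/= uv h]; rewrite uv;
        case: (keys_join sj je uv) => + _ _; apply.
    - by apply/subsetP => -[u v]; rewrite !invK // => /andP[/= uv h]; rewrite uv;
        case: (keys_join sj je uv) => _ + _; apply.
    - move=> d /subsetP ad /subsetP bd; apply/subsetP => -[u v] hc.
      move: (hc); rewrite invK // => /andP[/= uv h].
      case: (keys_join sj je uv) => _ _ /(_ h) /orP[ha|hb].
        by apply: ad; rewrite invK //= uv.
      by apply: bd; rewrite invK //= uv.
  have [_ [_ [_ G]]] := morph _ _ _ lub.
  have := G _ (Or_acyclic _ wf) (rt_refl _ _ _) (ltac:(rewrite -F3 F1; exact: F2)).
  move/PI_le_val => /(_ H0 H0I); rewrite F4a F4c leqNgt.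
  by move: sj; rewrite /ltb /= => ->.
-
  have F2 : PI_le I (Or I (kperm (okey false s j e 2 0 1))) (Or I (kperm (okey false s j e 2 1 0))).
    apply: (cover_PI (x := j) (y := e) wf); last by [].
    have je' : j != e by move: ej; rewrite eq_sym.
    have k1 : okey false s j e 2 0 1 e = (okey false s j e 2 0 1 j).+1 by rewrite okey_j ?okey_e ?addnS.
    have k2 : okey false s j e 2 1 0 j = okey false s j e 2 0 1 e by rewrite okey_j ?okey_e.
    have k3 : okey false s j e 2 1 0 e = okey false s j e 2 0 1 j by rewrite okey_j ?okey_e.
    apply: (key_cover i201 i210 je' k1 k2 k3).
    move=> v vj ve; case: (eqVneq v s) => [->|vs]; first by rewrite !okey_s.
    exact: okey_oth.
  have glb : weak_glb (kperm (okey false s j e 0 1 2)) (kperm (okey false s j e 1 0 2))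
      (kperm (okey false s j e 1 2 0)).
    split; [|split].
    - by apply/subsetP => -[u v]; rewrite !invK // => /andP[/= uv h]; rewrite uv;
        case: (keys_meet sj je uv) => + _ _; apply.
    - by apply/subsetP => -[u v]; rewrite !invK // => /andP[/= uv h]; rewrite uv;
        case: (keys_meet sj je uv) => _ + _; apply.
    - move=> d /subsetP da /subsetP db; apply/subsetP => -[u v] hd.
      move: (da _ hd) (db _ hd); rewrite !invK // => /andP[/= uv ha] /andP[_ hb].
      by rewrite uv; case: (keys_meet sj je uv) => _ _; apply.
  have [_ [_ [_ G]]] := morph _ _ _ glb.
  have := G _ (Or_acyclic _ wf) (rt_refl _ _ _) (ltac:(rewrite F1 -F3; exact: F2)).
  move/PI_le_val => /(_ H0 H0I); rewrite F4a F4c leqNgt.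
  by move: sj; rewrite /ltb /= => ->.
Qed.

Lemma meet_conv n (I : {set interval_t n}) : interval_hypergraph I ->
  Or_meet_morphism I -> closed_initial I.
Proof.
move=> hI morph i j k /andP[ij jk] ik.
have wf : wfI I := hI.1.
case: (boolP ((i, j) \in I)) => // nij; exfalso.
pose P m := (j <= m)%N && [exists k0 : 'I_n, (val k0 == m) && ((i, k0) \in I)].
have exP : exists m, P m.
  by exists k; rewrite /P (ltnW jk) /=; apply/existsP; exists k; rewrite eqxx ik.
case: (ex_minnP exP) => m /andP[jm /existsP[k0 /andP[/eqP k0m ik0]]] minm.
have jk0 : (j < k0)%N.
  rewrite ltn_neqAle k0m jm andbT; apply/negP => /eqP e.
  have : k0 = j by apply: val_inj; rewrite /= k0m e.
  by move=> e'; rewrite -e' ik0 in nij.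
apply: (@cex false n I i j k0 (i, k0) wf ij jk0 ik0).
- by move=> v; rewrite /inH /outs /ltb /=; lia.
- move=> [a b] HI; rewrite /inH /outs /ltb /= => /andP[ai ib] /andP[aj jb] nk.
  have bk : (b < k0)%N by move: nk; lia.
  case: (ltngtP a i) => [lai|lia'|/val_inj eai].
  + exists a; rewrite /inH /= leqnn lai /=; split => //.
    by have := wf _ HI.
  + by move: ai; rewrite leqNgt lia'.
  + subst a; have : P b.
      by rewrite /P jb /=; apply/existsP; exists b; rewrite eqxx HI.
    by move/minm; rewrite -k0m => h; move: bk; rewrite ltnNge h.
- exact: morph.
Qed.

Lemma join_conv n (I : {set interval_t n}) : interval_hypergraph I ->
  Or_join_morphism I -> closed_final I.
Proof.
move=> hI morph i j k /andP[ij jk] ik.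
have wf : wfI I := hI.1.
case: (boolP ((j, k) \in I)) => // njk; exfalso.
pose P m := (m <= j)%N && [exists i0 : 'I_n, (val i0 == m) && ((i0, k) \in I)].
have exP : exists m, P m.
  by exists i; rewrite /P (ltnW ij) /=; apply/existsP; exists i; rewrite eqxx ik.
have ubP : forall m, P m -> (m <= j)%N by move=> m /andP[].
case: (ex_maxnP exP ubP) => m /andP[mj /existsP[i0 /andP[/eqP i0m i0k]]] maxm.
have i0j : (i0 < j)%N.
  rewrite ltn_neqAle i0m mj andbT; apply/negP => /eqP e.
  have : i0 = j by apply: val_inj; rewrite /= i0m e.
  by move=> e'; rewrite e' in i0k; rewrite i0k in njk.
apply: (@cex true n I k j i0 (i0, k) wf jk i0j i0k).
- by move=> v; rewrite /inH /outs /ltb /=; lia.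
- move=> [a b] HI; rewrite /inH /outs /ltb /= => /andP[ak kb] /andP[aj jb] ni.
  have ia : (i0 < a)%N by move: ni; lia.
  case: (ltngtP k b) => [lkb|lbk|/val_inj ekb].
  + exists b; split; last by apply/orP; left.
    by rewrite /inH /= leqnn andbT; have := wf _ HI.
  + by move: kb; rewrite leqNgt lbk.
  + subst b; have : P a.
      by rewrite /P aj /=; apply/existsP; exists a; rewrite eqxx HI.
    by move/maxm; rewrite -i0m => h; move: ia; rewrite ltnNge h.
- exact: morph.
Qed.

Theorem theoremD (n : nat) (I : {set interval_t n}) :
  (1 <= n)%N -> interval_hypergraph I ->
  (Or_meet_morphism I <-> closed_initial I) /\
  (Or_join_morphism I <-> closed_final I).
Proof.
move=> _ hI; split; split.
- exact: meet_conv.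
- exact: meet_dir.
- exact: join_conv.
- exact: join_dir.
Qed.
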